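(* Let $p(1),\dots,p(K)\in[0,1]$, let $\mathbb F_i$ be the CDF of $\mathrm{Bern}(p(i))$, and for $\alpha\in\Delta^{K-1}$ write $\mathbb F_\alpha=\sum_i\alpha(i)\mathbb F_i$. Let $h(u)=\sqrt u-u$. Then: (1) for all $\alpha,\beta\in\Delta^{K-1}$, $U_h(\mathbb F_\alpha)-U_h(\mathbb F_\beta)\le\|\mathbb F_\alpha-\mathbb F_\beta\|_{\mathrm W}^{1/2}$; (2) let $\alpha^\star\in\arg\max_{\alpha\in\Delta^{K-1}}U_h(\mathbb F_\alpha)$ and $\mathbb F^\star=\mathbb F_{\alpha^\star}$. If $\max_i p(i)>\tfrac14$ and $\min_i p(i)<\tfrac14$, then $U_h(\mathbb F^\star)-U_h(\mathbb F_\alpha)\le\|\mathbb F^\star-\mathbb F_\alpha\|_{\mathrm W}$ for all $\alpha\in\Delta^{K-1}$; in all cases, $U_h(\mathbb F^\star)-U_h(\mathbb F_\alpha)\le\|\mathbb F^\star-\mathbb F_\alpha\|_{\mathrm W}^{1/2}$ for all $\alpha$.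
   Context: For a CDF $Q$ of a nonnegative random variable, $U_h(Q)=\int_0^\infty h(1-Q(x))\,dx$. $\|G-S\|_{\mathrm W}=\int|G(x)-S(x)|dx$ is the 1-Wasserstein distance. $\Delta^{K-1}$ is the probability simplex in $\mathbb R^K$. *)

(* Defs.v *)
From HB Require Import structures.
From mathcomp Require Import all_boot all_order all_algebra.
From mathcomp Require Import all_classical all_reals all_analysis.
Set Implicit Arguments. Unset Strict Implicit. Unset Printing Implicit Defensive.
Import Order.TTheory GRing.Theory Num.Theory.
Local Open Scope classical_set_scope.
Local Open Scope ring_scope.

Definition bern_cdf (R : realType) (p : R) (x : R) : R :=
  if x < 0 then 0 else if x < 1 then 1 - p else 1.

Definition simplex (R : realType) (K : nat) (a : 'I_K -> R) : Prop :=
  (forall i, 0 <= a i) /\ \sum_(i < K) a i = 1.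

Definition mix_cdf (R : realType) (K : nat) (p : 'I_K -> R) (a : 'I_K -> R)
  (x : R) : R := \sum_(i < K) a i * bern_cdf (p i) x.

Definition U_h (R : realType) (h : R -> R) (Q : R -> R) : R :=
  Rintegral (@lebesgue_measure R) `[0%R, +oo[ (fun x => h (1 - Q x)).

Definition wass (R : realType) (G S : R -> R) : R :=
  Rintegral (@lebesgue_measure R) setT (fun x => `|G x - S x|).

Definition hsq (R : realType) (u : R) : R := Num.sqrt u - u.

(* Main.v *)
Require Import Defs.
From HB Require Import structures.
From mathcomp Require Import all_boot all_order all_algebra.
From mathcomp Require Import all_classical all_reals all_analysis.
From mathcomp Require Import ring lra.
Import Order.TTheory GRing.Theory Num.Theory.
Local Open Scope ring_scope.
Local Open Scope classical_set_scope.


Lemma key (R : realType) (D : set R) (f : R -> R) (c : R) :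
  (forall x, (if x \in D then f x else 0) = (if (0 <= x) && (x < 1) then c else 0)) ->
  Rintegral (@lebesgue_measure R) D f = c.
Proof.
move=> H.
rewrite Rintegral_mkcond.
transitivity (Rintegral (@lebesgue_measure R) `[0, 1[ (fun=> c)); last first.
  rewrite Rintegral_cst //.
  have E := @lebesgue_measure_itv R `[0, 1[%R.
  rewrite /= lte_fin ltr01 oppr0 adde0 in E.
  have -> : fine (lebesgue_measure (`[0, 1[%classic : set R)) = 1 by rewrite E.
  by rewrite mulr1.
rewrite [RHS]Rintegral_mkcond.
congr (Rintegral _ _ _); apply/funext => x; rewrite !patchE H /=.
by rewrite mem_setE in_itv /=.
Qed.
Local Close Scope classical_set_scope.





Lemma L1 (R : realType) (x y : R) : 0 <= x <= 1 -> 0 <= y <= 1 ->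
  hsq x - hsq y <= Num.sqrt `|x - y|.
Proof.
move=> /andP[x0 x1] /andP[y0 y1]; rewrite /hsq.
have sx0 := sqrtr_ge0 x; have sy0 := sqrtr_ge0 y.
have hx := sqr_sqrtr x0; have hy := sqr_sqrtr y0.
have sd0 := sqrtr_ge0 `|x - y|; have hd := sqr_sqrtr (normr_ge0 (x - y)).
move: (Num.sqrt x) (Num.sqrt y) (Num.sqrt `|x-y|) sx0 sy0 sd0 hx hy hd => sx sy sd sx0 sy0 sd0 hx hy hd.
have [xy|xy] := lerP y x.
  rewrite ger0_norm ?subr_ge0 // in hd.
  have : sy <= sx by nra.
  move=> syx.
  nra.
rewrite ltr0_norm ?subr_lt0 // in hd.
have : sx <= sy by nra.
move=> sxy.
have : sd <= 1 by nra.
nra.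
Qed.

Lemma L2 (R : realType) (u : R) : 0 <= u -> hsq u <= 1/4.
Proof.
move=> u0; rewrite /hsq; have s0 := sqrtr_ge0 u; have h := sqr_sqrtr u0.
move: (Num.sqrt u) s0 h => s s0 h; have := sqr_ge0 (s - 1/2); nra.
Qed.

Lemma L3 (R : realType) (x y : R) : 0 <= x -> 0 <= y -> 1/4 <= hsq x ->
  hsq x - hsq y <= `|x - y|.
Proof.
move=> x0 y0; rewrite /hsq; have sx0 := sqrtr_ge0 x; have hx := sqr_sqrtr x0.
have sy0 := sqrtr_ge0 y; have hy := sqr_sqrtr y0.
move: (Num.sqrt x) (Num.sqrt y) sx0 hx sy0 hy => sx sy sx0 hx sy0 hy h.
have q := sqr_ge0 (sx - 1/2).
have e0 : (sx - 1/2) ^+ 2 = 0 by nra.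
have e : sx = 1/2.
  move/eqP: e0; rewrite sqrf_eq0 subr_eq0 => /eqP //.
have ex : x = 1/4 by nra.
rewrite e ex; rewrite -hy.
have [xy|xy] := lerP y (1/4).
  rewrite ger0_norm ?subr_ge0 //; nra.
rewrite ltr0_norm ?subr_lt0 //; nra.
Qed.

Definition qq (R : realType) (K : nat) (p : 'I_K -> R) (a : 'I_K -> R) : R := \sum_(i < K) a i * p i.
Arguments qq {R K}.

Lemma qq_range (R : realType) (K : nat) (p : 'I_K -> R) (hp : forall i, 0 <= p i <= 1) a : simplex a -> 0 <= qq p a <= 1.
Proof.
move=> [a0 a1]; apply/andP; split.
  by apply: sumr_ge0 => i _; apply: mulr_ge0 => //; case/andP: (hp i).
rewrite -a1; apply: ler_sum => i _.
by rewrite -[leRHS]mulr1; apply: ler_wpM2l => //; case/andP: (hp i).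
Qed.

Lemma mixE (R : realType) (K : nat) (p : 'I_K -> R) a x : simplex a ->
  mix_cdf p a x = if x < 0 then 0 else if x < 1 then 1 - qq p a else 1.
Proof.
move=> [a0 a1]; rewrite /mix_cdf /bern_cdf /qq.
case: (boolP (x < 0)) => x0.
  by rewrite big1 // => i _; rewrite mulr0.
case: (boolP (x < 1)) => x1.
  rewrite -[X in X - _]a1 -sumrB; apply: eq_bigr => i _; by rewrite mulrBr mulr1.
by rewrite -[RHS]a1; apply: eq_bigr => i _; rewrite mulr1.
Qed.

Lemma Uval (R : realType) (K : nat) (p : 'I_K -> R) a : simplex a -> U_h (@hsq R) (mix_cdf p a) = hsq (qq p a).
Proof.
move=> sa; apply: key => x; rewrite mem_setE in_itv /= andbT mixE //.
have [x0|x0] := ltrP x 0.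
  by [].
rewrite /=; case: ifP => _ //.
  by congr hsq; ring.
by rewrite subrr /hsq sqrtr0 subr0.
Qed.

Lemma wassE (R : realType) (K : nat) (p : 'I_K -> R) a b : simplex a -> simplex b ->
  wass (mix_cdf p a) (mix_cdf p b) = `|qq p a - qq p b|.
Proof.
move=> sa sb; apply: key => x; rewrite in_setT !mixE //.
have [x0|x0] := ltrP x 0.
  by rewrite /= subrr normr0.
rewrite /=; case: ifP => _.
  by rewrite -normrN; congr `|_|; ring.
by rewrite subrr normr0.
Qed.


Lemma two_point (R : realType) (K : nat) (i j : 'I_K) (t : R) (g : 'I_K -> R) :
  i != j ->
  \sum_(k < K) (if k == i then t else if k == j then 1 - t else 0) * g k
  = t * g i + (1 - t) * g j.
Proof.
move=> ij.
rewrite (bigD1 i) //= eqxx (bigD1 j) /=; last by rewrite eq_sym.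
rewrite eq_sym (negbTE ij) eqxx addrA big1 ?addr0 // => k /andP[ki kj].
by rewrite (negbTE ki) (negbTE kj) mul0r.
Qed.

Theorem mainTheorem6 (R : realType) (K : nat) (p : 'I_K -> R)
  (hp : forall i, 0 <= p i <= 1) :
  (forall a b : 'I_K -> R, simplex a -> simplex b ->
     U_h (@hsq R) (mix_cdf p a) - U_h (@hsq R) (mix_cdf p b)
       <= Num.sqrt (wass (mix_cdf p a) (mix_cdf p b)))
  /\
  (forall astar : 'I_K -> R, simplex astar ->
     (forall a : 'I_K -> R, simplex a ->
        U_h (@hsq R) (mix_cdf p a) <= U_h (@hsq R) (mix_cdf p astar)) ->
     (((exists i, 1 / 4 < p i) /\ (exists j, p j < 1 / 4)) ->
        forall a : 'I_K -> R, simplex a ->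
          U_h (@hsq R) (mix_cdf p astar) - U_h (@hsq R) (mix_cdf p a)
            <= wass (mix_cdf p astar) (mix_cdf p a))
     /\
     (forall a : 'I_K -> R, simplex a ->
          U_h (@hsq R) (mix_cdf p astar) - U_h (@hsq R) (mix_cdf p a)
            <= Num.sqrt (wass (mix_cdf p astar) (mix_cdf p a)))).
Proof.
have P1 : forall a b : 'I_K -> R, simplex a -> simplex b ->
     U_h (@hsq R) (mix_cdf p a) - U_h (@hsq R) (mix_cdf p b)
       <= Num.sqrt (wass (mix_cdf p a) (mix_cdf p b)).
  move=> a b sa sb; rewrite !Uval // wassE //.
  by apply: L1; apply: qq_range.
split=> // ast sas hmax; split; last by move=> a sa; apply: P1.
move=> [[i hi] [j hj]] a sa.
have ij : i != j.
  by apply/eqP => e; subst j; move: (lt_trans hj hi); rewrite ltxx.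
have dpos : 0 < p i - p j by rewrite subr_gt0; apply: lt_trans hj hi.
pose t := (1/4 - p j) / (p i - p j).
have t0 : 0 <= t by apply: divr_ge0; [rewrite subr_ge0; exact: ltW | exact: ltW].
have t1 : t <= 1.
  rewrite ler_pdivrMr // mul1r; lra.
pose al := fun k : 'I_K => if k == i then t else if k == j then 1 - t else 0.
have sal : simplex al.
  split.
    move=> k; rewrite /al; case: ifP => _ //; case: ifP => _ //.
    by rewrite subr_ge0.
  have := @two_point R K i j t (fun=> 1) ij.
  rewrite !mulr1 subrKC => <-.
  by apply: eq_bigr => k _; rewrite mulr1.
have qal : qq p al = 1/4.
  rewrite /qq (@two_point R K i j t p ij) /t.
  field; by rewrite lt0r_neq0.
have := hmax al sal; rewrite !Uval // qal => hge.
rewrite wassE //; apply: L3.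
- by case/andP: (@qq_range R K p hp _ sas).
- by case/andP: (@qq_range R K p hp _ sa).
- apply: le_trans hge; rewrite /hsq.
  have -> : (1/4 : R) = (1/2) ^+ 2 by field.
  rewrite sqrtr_sqr ger0_norm; last by [].
  by rewrite expr2; lra.
Qed.
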